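(* (1) Let $f,g$ be two packed words (of the same length). Then $f\leq g$ if, and only if, $\mathrm{Std}(f)=\mathrm{Std}(g)$ and $M(f)\subseteq M(g)$. (2) For all $n\geq1$, the map $$\Phi:(\{\text{packed words of length }n\},\leq)\longrightarrow\bigsqcup_{\sigma\in\mathfrak{S}_n}(\{\text{subsets of }M(\sigma)\},\subseteq),\qquad f\longmapsto M(f)\subseteq M(\mathrm{Std}(f)),$$ is an isomorphism of posets (the target being the disjoint union of the posets of subsets of $M(\sigma)$ ordered by inclusion, with elements in different components incomparable). Hence the poset of packed words of length $n$ is a disjoint union, indexed by $\sigma\in\mathfrak{S}_n$, of posets isomorphic to the Boolean lattices of subsets of $M(\sigma)$.
   Context: $[n]=\{1,\ldots,n\}$. A packed word of length $n$ is a word $f=f(1)\ldots f(n)$ of positive integers with $\{f(1),\ldots,f(n)\}=[\max f]$; permutations of $[n]$ are the packed words of length $n$ with distinct letters, $\mathfrak{S}_n$ their set. For packed words $f,g$ of length $n$, $g\leq f$ means: for all $i,j\in[n]$, $f(i)\leq f(j)\Rightarrow g(i)\leq g(j)$; $f(i)>f(j)$ and $i<j\Rightarrow g(i)>g(j)$; $f(i)=f(j)\Rightarrow g(i)=g(j)$. The standardization $\mathrm{Std}(f)$ of a packed word $f$ of length $n$ is the unique $\sigma\in\mathfrak{S}_n$ such that for all $i,j$: $f(i)<f(j)\Rightarrow\sigma(i)<\sigma(j)$, and ($f(i)=f(j)$ and $i<j$) $\Rightarrow\sigma(i)<\sigma(j)$. For a packed word $f$ of length $n$, $M(f)$ is the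 set of $i\in[n]$ such that: $f(i)<\max f$; for all $j\in[n]$, $f(j)=f(i)\Rightarrow j\leq i$; and for all $j\in[n]$, $f(j)=f(i)+1\Rightarrow j>i$. *)

(* Defs.v *)
From mathcomp Require Import all_boot all_fingroup.
Set Implicit Arguments. Unset Strict Implicit. Unset Printing Implicit Defensive.

(* A word of length n: positions are 'I_n (0-based: position i <-> i+1 of the
   paper), letters are natural numbers. *)
Definition word (n : nat) := {ffun 'I_n -> nat}.

Definition maxw n (f : word n) : nat := \max_(i < n) f i.

Definition packed n (f : word n) : bool :=
  all (fun k => k \in iota 1 (maxw f)) (codom f) &&
  all (fun k => k \in codom f) (iota 1 (maxw f)).

Definition is_perm_word n (f : word n) : bool := packed f && injectiveb f.

(* g <= f  (note the argument order: pw_le g f) *)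
Definition pw_le n (g f : word n) : Prop :=
  forall i j : 'I_n,
    (f i <= f j -> g i <= g j) /\
    (f i > f j -> i < j -> g i > g j) /\
    (f i = f j -> g i = g j).

Definition std_spec n (f : word n) (s : {perm 'I_n}) : bool :=
  [forall i, forall j,
     ((f i < f j) ==> (s i < s j)) && (((f i == f j) && (i < j)) ==> (s i < s j))].

(* Std(f): the unique permutation with the property above, as a word with
   letters in 1..n (value s(i)+1). *)
Definition Std n (f : word n) : word n :=
  [ffun i => (odflt 1%g [pick s : {perm 'I_n} | std_spec f s] i).+1].

Definition M n (f : word n) : {set 'I_n} :=
  [set i : 'I_n | [&& (f i < maxw f),
                      [forall j : 'I_n, (f j == f i) ==> (j <= i)] &
                      [forall j : 'I_n, (f j == (f i).+1) ==> (j > i)]]].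

(* The map Phi : f |-> (Std f, M f), the target being the disjoint union over
   sigma of the subsets of M(sigma). *)
Definition Phi n (f : word n) : word n * {set 'I_n} := (Std f, M f).

Definition du_le n (x y : word n * {set 'I_n}) : Prop :=
  x.1 = y.1 /\ x.2 \subset y.2.

(* Main.v *)
Require Import Defs.
From mathcomp Require Import all_boot all_fingroup zify.
Set Implicit Arguments. Unset Strict Implicit. Unset Printing Implicit Defensive.

Section Basics.
Variable n : nat.
Implicit Types f g : word n.

Lemma leq_maxw f i : f i <= maxw f.
Proof. exact: leq_bigmax. Qed.

Lemma packedP f : packed f <->
  ((forall i, 0 < f i) /\ (forall v, 0 < v -> v <= maxw f -> exists i, f i = v)).
Proof.
rewrite /packed; split.
- case/andP => /allP H1 /allP H2; split.
  + move=> i; have := H1 _ (codom_f f i); rewrite mem_iota; lia.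
  + move=> v v0 vm; have : v \in iota 1 (maxw f) by rewrite mem_iota; lia.
    by move/H2/codomP => [i ->]; exists i.
- case=> H1 H2; apply/andP; split; apply/allP => k.
  + case/codomP => i ->; rewrite mem_iota; have := H1 i; have := leq_maxw f i; lia.
  + rewrite mem_iota => Hk; have [|//|i <-] := H2 k; try lia; exact: codom_f.
Qed.

Lemma packed_pos f i : packed f -> 0 < f i.
Proof. by case/packedP => H _. Qed.
Lemma packed_val f v : packed f -> 0 < v -> v <= maxw f -> exists i, f i = v.
Proof. by case/packedP => _ H; apply: H. Qed.

Lemma maxw_lt f v : 0 < v -> (forall i, f i < v) -> maxw f < v.
Proof.
case: v => [//|v] _ H.
by rewrite ltnS; apply/bigmax_leqP => i _; have := H i; lia.
Qed.

Lemma exists_ge f v : v <= maxw f -> 0 < v -> exists i, v <= f i.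
Proof.
move=> Hv v0; case: (pickP (fun i => v <= f i)) => [i Hi|H]; first by exists i.
have : maxw f < v by apply: maxw_lt => // i; have := H i; rewrite leqNgt => /negbFE.
lia.
Qed.

Definition ltw f (i j : 'I_n) : bool := (f i < f j) || ((f i == f j) && (i < j)).

Lemma ltw_irr f i : ltw f i i = false.
Proof. rewrite /ltw; lia. Qed.
Lemma ltw_asym f i j : ltw f i j -> ltw f j i = false.
Proof. rewrite /ltw; lia. Qed.
Lemma ltw_trans f i j k : ltw f i j -> ltw f j k -> ltw f i k.
Proof. rewrite /ltw; lia. Qed.
Lemma ltw_total f i j : i != j -> ltw f i j || ltw f j i.
Proof. move=> ne; have ne' : nat_of_ord i != nat_of_ord j by []; move: ne'; rewrite /ltw; lia. Qed.
Lemma ltw_le f i j : ltw f i j -> f i <= f j.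
Proof. rewrite /ltw; lia. Qed.
Lemma ltw_inj f i j : injective f -> ltw f i j = (f i < f j).
Proof.
move=> inj; rewrite /ltw; case: (eqVneq (f i) (f j)) => [E|]; last by rewrite andFb orbF.
by rewrite (inj _ _ E) !ltnn.
Qed.

Lemma ltw_sub_eq f g : (forall i j, ltw g i j -> ltw f i j) ->
  forall i j, ltw f i j = ltw g i j.
Proof.
move=> H i j; case Hg: (ltw g i j); first by rewrite H.
case: (eqVneq i j) => [->|ne]; first by rewrite ltw_irr.
have := ltw_total g ne; rewrite Hg /= => /H /ltw_asym //.
Qed.

End Basics.

Section StdSec.
Variable n : nat.
Implicit Types f g : word n.

Lemma std_specP f (s : {perm 'I_n}) :
  reflect (forall i j, ltw f i j -> s i < s j) (std_spec f s).
Proof.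
apply: (iffP forallP) => [H i j|H i].
- move/forallP: (H i) => /(_ j) /andP [H1 H2]; rewrite /ltw => /orP [/(implyP H1)|/(implyP H2)] //.
- apply/forallP => j; apply/andP; split; apply/implyP => Hij; apply: H; rewrite /ltw Hij //.
  by rewrite orbT.
Qed.

Definition rk f (i : 'I_n) := #|[set k | ltw f k i]|.

Lemma rk_lt f i : rk f i < n.
Proof.
rewrite /rk; apply: (@leq_trans #|[set: 'I_n]|); last by rewrite cardsT card_ord.
apply: proper_card; apply/properP; split.
  by apply/subsetP => k; rewrite inE.
by exists i; rewrite ?inE ?ltw_irr.
Qed.

Lemma rk_mono f i j : ltw f i j -> rk f i < rk f j.
Proof.
move=> Hij; apply: proper_card; apply/properP; split.
  by apply/subsetP => k; rewrite !inE => /ltw_trans; apply.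
by exists i; rewrite ?inE ?ltw_irr.
Qed.

Lemma std_exists f : exists s : {perm 'I_n}, std_spec f s.
Proof.
pose sf (i : 'I_n) := Ordinal (rk_lt f i).
have inj : injective sf.
  move=> i j /(congr1 val) /= E; apply/eqP; apply/negPn/negP => ne.
  by have := ltw_total f ne => /orP [/rk_mono|/rk_mono]; rewrite E ltnn.
exists (perm inj); apply/std_specP => i j Hij; rewrite !permE /=; exact: rk_mono.
Qed.

Lemma Std_perm f : exists s : {perm 'I_n}, std_spec f s /\ forall i, Std f i = (s i).+1.
Proof.
rewrite /Std; case: pickP => [s Hs|H]; first by exists s; split => // i; rewrite ffunE.
by have [s Hs] := std_exists f; rewrite H in Hs.
Qed.

Lemma Std_inj f : injective (Std f).
Proof.
have [s [_ Hs]] := Std_perm f; move=> i j; rewrite !Hs => -[] /val_inj; exact: perm_inj.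
Qed.

Lemma Std_ltw f i j : ltw (Std f) i j = ltw f i j.
Proof.
apply: ltw_sub_eq => {}i {}j; have [s [/std_specP Hs E]] := Std_perm f.
move=> H; rewrite ltw_inj; [rewrite !E ltnS; exact: Hs | exact: Std_inj].
Qed.

Lemma Std_eq f g : (forall i j, ltw f i j = ltw g i j) -> Std f = Std g.
Proof.
move=> H; rewrite /Std; congr finfun; rewrite (@eq_pick _ _ (std_spec g)) //.
move=> s; apply/std_specP/std_specP => H' i j; [rewrite -H | rewrite H]; exact: H'.
Qed.

Lemma Std_eq_ltw f g : Std f = Std g -> forall i j, ltw f i j = ltw g i j.
Proof. move=> E i j; have := Std_ltw f i j; have := Std_ltw g i j; rewrite E; congruence. Qed.

End StdSec.

Section MSec.
Variable n : nat.
Implicit Types f g : word n.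

Lemma MP f i : reflect [/\ f i < maxw f, (forall j, f j = f i -> j <= i)
   & (forall j, f j = (f i).+1 -> i < j)] (i \in M f).
Proof.
rewrite /M inE; apply: (iffP and3P) => [[H1 /forallP H2 /forallP H3]|[H1 H2 H3]]; split => //.
- by move=> j E; move/implyP: (H2 j); apply; rewrite E.
- by move=> j E; move/implyP: (H3 j); apply; rewrite E.
- by apply/forallP => j; apply/implyP => /eqP /H2.
- by apply/forallP => j; apply/implyP => /eqP /H3.
Qed.

Lemma last_val f i : exists l, f l = f i /\ forall k, f k = f i -> k <= l.
Proof.
case: (@arg_maxnP _ i (fun l => f l == f i) (fun l => nat_of_ord l)) => //.
move=> l /eqP Hl Hm; exists l; split => // k /eqP; exact: Hm.
Qed.

Lemma first_val f i : exists l, f l = f i /\ forall k, f k = f i -> l <= k.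
Proof.
case: (@arg_minnP _ i (fun l => f l == f i) (fun l => nat_of_ord l)) => //.
move=> l /eqP Hl Hm; exists l; split => // k /eqP; exact: Hm.
Qed.

Lemma ltw_of_lt f i j : f i < f j -> ltw f i j.
Proof. by rewrite /ltw => ->. Qed.
Lemma ltw_of_eq f i j : f i = f j -> i < j -> ltw f i j.
Proof. by rewrite /ltw => -> ->; rewrite eqxx orbT. Qed.
Lemma ltw_eq_lt f i j : ltw f i j -> f i = f j -> i < j.
Proof. rewrite /ltw; lia. Qed.

Lemma M_sub f g : packed f -> (forall i j, ltw f i j = ltw g i j) ->
  (forall i j, f i < f j -> g i < g j) -> (forall i j, g i = g j -> f i = f j) ->
  M f \subset M g.
Proof.
move=> pf Hl Hlt Heq; apply/subsetP => i /MP [H1 H2 H3]; apply/MP; split.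
- have [k Hk] := packed_val pf (leq_ltn_trans (leq0n _) H1) (leqnn _).
  apply: (leq_trans _ (leq_maxw g k)); apply: Hlt; rewrite Hk //.
- move=> j /Heq; exact: H2.
- move=> j Ej; have : ltw g i j by apply: ltw_of_lt; rewrite Ej.
  rewrite -Hl => /ltw_le; rewrite leq_eqVlt => /orP [/eqP E|lt].
  + have Hj := H2 _ (esym E); case: (ltngtP i j) => // [ji|ij].
    * have : ltw g j i by rewrite -Hl; apply: ltw_of_eq.
      by move/ltw_le; rewrite Ej; lia.
    * by move: Ej; rewrite (val_inj ij); lia.
  + case: (ltngtP (f j) (f i).+1) => [lt'|gt|E]; [lia| |exact: H3 _ E].
    have [k Hk] := packed_val pf (ltn0Sn _) (leq_trans (ltnW gt) (leq_maxw f j)).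
    have := Hlt i k; have := Hlt k j; rewrite Hk Ej; lia.
Qed.

Lemma pw_le_ltw f g : pw_le f g -> forall i j, ltw f i j = ltw g i j.
Proof.
move=> H; apply: ltw_sub_eq => i j; rewrite /ltw => /orP [lt|/andP [/eqP E ij]].
- have [H1 _] := H i j; have [_ [H2 _]] := H j i.
  have := H1 (ltnW lt); rewrite leq_eqVlt => /orP [/eqP E|->] //.
  case: (ltngtP i j) => [ij|ji|/val_inj ij]; first lia.
  + by have := H2 lt ji; lia.
  + by move: lt; rewrite ij ltnn.
- by have [_ [_ H3]] := H i j; have := H3 E; lia.
Qed.

Lemma pw_le_M f g : packed f -> pw_le f g -> M f \subset M g.
Proof.
move=> pf H; apply: M_sub => //; first exact: pw_le_ltw.
- move=> i j lt; rewrite ltnNge; apply/negP => le; have [H1 _] := H j i.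
  by have := H1 le; lia.
- by move=> i j E; have [_ [_ H3]] := H i j; exact: H3 E.
Qed.

Lemma pw_le_of f g : packed f -> (forall i j, ltw f i j = ltw g i j) ->
  M f \subset M g -> pw_le f g.
Proof.
move=> pf Hl HM.
have Hc : forall i j, g i = g j -> i < j -> f i = f j.
  move=> i j Eg ij; have : ltw f i j by rewrite Hl; apply: ltw_of_eq.
  move/ltw_le; rewrite leq_eqVlt => /orP [/eqP //|lt].
  have [l [Hl1 Hl2]] := last_val f i.
  have [k Hk] := packed_val pf (ltn0Sn (f i)) (leq_trans lt (leq_maxw f j)).
  have [l' [Hl'1 Hl'2]] := first_val f k.
  have gil : g i <= g l.
    case: (ltngtP i l) => [il|li|/val_inj ->] //.
    - by apply: ltw_le; rewrite -Hl; apply: ltw_of_eq.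
    - by have := Hl2 i erefl; lia.
  have gl'j : g l' <= g j.
    case: (ltngtP (f l') (f j)) => [lt'|gt'|E'].
    - by apply: ltw_le; rewrite -Hl; apply: ltw_of_lt.
    - by move: gt'; rewrite Hl'1 Hk; lia.
    - have lj := Hl'2 j (etrans (esym E') Hl'1).
      move: lj; rewrite leq_eqVlt => /orP [/eqP /val_inj -> //|lj].
      by apply: ltw_le; rewrite -Hl; apply: ltw_of_eq.
  have : ltw g l l' by rewrite -Hl; apply: ltw_of_lt; rewrite Hl1 Hl'1 Hk.
  move=> Hll'; have Egl : g l = g l'.
    by have := ltw_le Hll'; lia.
  have ll' := ltw_eq_lt Hll' Egl.
  have : l \in M f.
    apply/MP; split.
    - by rewrite Hl1 -Hk -Hl'1; apply: leq_maxw.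
    - by move=> m; rewrite Hl1; apply: Hl2.
    - move=> m Em; apply: (leq_trans ll'); apply: Hl'2; rewrite Em Hl1 Hk //.
  move/(subsetP HM)/MP => [_ Hg _]; have := Hg l' (esym Egl); lia.
move=> i j; split; [|split].
- rewrite leq_eqVlt => /orP [/eqP E|lt].
  + case: (ltngtP i j) => [ij|ji|/val_inj ->] //.
    * by rewrite (Hc _ _ E ij).
    * by rewrite (Hc _ _ (esym E) ji).
  + by apply: ltw_le; rewrite Hl; apply: ltw_of_lt.
- move=> gt ij; have : ltw f j i by rewrite Hl; apply: ltw_of_lt.
  rewrite /ltw; lia.
- move=> E; case: (ltngtP i j) => [ij|ji|/val_inj ->] //.
  + exact: Hc.
  + by rewrite (Hc _ _ (esym E) ji).
Qed.

Lemma pw_le_iff f g : packed f -> pw_le f g <-> (Std f = Std g /\ M f \subset M g).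
Proof.
move=> pf; split.
- move=> H; split; [apply: Std_eq; exact: pw_le_ltw | exact: pw_le_M].
- move=> [E HM]; apply: pw_le_of => //; exact: Std_eq_ltw.
Qed.

Lemma order_iso f g : packed f -> packed g ->
  (forall i j, (f i < f j) = (g i < g j)) -> f = g.
Proof.
move=> pf pg H.
suff K : forall v i, f i = v -> g i = v by apply/ffunP => i; rewrite (K _ i erefl).
elim/ltn_ind => v IH i Ei.
have gi1 := packed_pos i pg; have fi1 := packed_pos i pf.
have fm := leq_maxw f i; have gm := leq_maxw g i; rewrite Ei in fi1 fm.
case: (ltngtP (g i) v) => [lt|gt|//].
- case: v IH Ei lt fi1 fm => [|[|v]] IH Ei lt fi1 fm; try lia.
  have [k Hk] := packed_val pf (ltn0Sn v) (leq_trans (leqnSn _) fm).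
  have := IH _ (leqnn _) _ Hk; have := H k i; rewrite Hk Ei; lia.
- have [k Hk] := packed_val pg fi1 (leq_trans (ltnW gt) gm).
  have := H k i; rewrite Hk Ei => E.
  have lt : f k < v by rewrite E.
  have := IH _ lt k erefl; lia.
Qed.

End MSec.

Section StdProps.
Variable n : nat.
Implicit Types f g : word n.

Lemma Std_packed f : packed (Std f).
Proof.
have [s [_ E]] := Std_perm f; apply/packedP; split => [i|v v0 vm]; first by rewrite E.
have mn : maxw (Std f) <= n by apply/bigmax_leqP => i _; rewrite E.
have vn : v.-1 < n by lia.
exists ((s^-1)%g (Ordinal vn)); rewrite E permKV /=; lia.
Qed.

Lemma Std_perm_word f : is_perm_word (Std f).
Proof. apply/andP; split; [exact: Std_packed | apply/injectiveP; exact: Std_inj]. Qed.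

Lemma Std_M f : packed f -> M f \subset M (Std f).
Proof.
move=> pf; apply: M_sub => //.
- by move=> i j; rewrite Std_ltw.
- move=> i j /(ltw_of_lt) ; rewrite -Std_ltw ltw_inj //; exact: Std_inj.
- by move=> i j /Std_inj ->.
Qed.

Lemma Std_id (s : word n) : is_perm_word s -> Std s = s.
Proof.
case/andP => ps /injectiveP inj; apply: order_iso => //; first exact: Std_packed.
by move=> i j; rewrite -ltw_inj; [rewrite Std_ltw ltw_inj | exact: Std_inj].
Qed.

Lemma Phi_inj f g : packed f -> packed g -> Std f = Std g -> M f = M g -> f = g.
Proof.
move=> pf pg ES EM.
have H1 : pw_le f g by apply/(pw_le_iff g pf); split => //; rewrite EM subxx.
have H2 : pw_le g f by apply/(pw_le_iff f pg); split => //; rewrite EM subxx.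
apply: order_iso => // i j.
have [A _] := H1 j i; have [B _] := H2 j i.
by apply/idP/idP; rewrite !ltnNge; apply: contra; [apply: A | apply: B].
Qed.

End StdProps.

Section Surj.
Variable n : nat.
Variable s : word n.
Variable S : {set 'I_n}.
Hypothesis ps : packed s.
Hypothesis inj : injective s.
Hypothesis HS : S \subset M s.

Definition C := [set i | (s i < maxw s) && ((i \in S) || (i \notin M s))].
Definition cset (i : 'I_n) := [set k in C | s k < s i].
Definition fw : word n := [ffun i => #|cset i|.+1].

Lemma csetE k i : (k \in cset i) = (k \in C) && (s k < s i).
Proof. by rewrite /cset inE. Qed.

Lemma CE i : (i \in C) = (s i < maxw s) && ((i \in S) || (i \notin M s)).
Proof. by rewrite /C inE. Qed.

Lemma fwE i : fw i = #|cset i|.+1.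
Proof. by rewrite ffunE. Qed.

Lemma fmono i j : s i <= s j -> fw i <= fw j.
Proof.
move=> le; rewrite !fwE ltnS; apply: subset_leq_card; apply/subsetP => k.
rewrite !csetE => /andP [-> lt] /=; exact: leq_trans lt le.
Qed.

Lemma fsucc i j : s j = (s i).+1 -> fw j = fw i + (i \in C).
Proof.
move=> E; rewrite !fwE; case iC: (i \in C).
- have -> : cset j = i |: cset i.
    apply/setP => k; rewrite ?in_setU1 !csetE E ltnS leq_eqVlt.
    case: (eqVneq k i) => [->|ne]; first by rewrite iC eqxx.
    by have -> : (s k == s i) = false by apply/negbTE; apply: contra ne => /eqP /inj ->.
  by rewrite cardsU1 csetE ltnn andbF addn1.
- have -> : cset j = cset i.
    apply/setP => k; rewrite ?in_setU1 !csetE E ltnS leq_eqVlt.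
    case: (eqVneq k i) => [->|ne]; first by rewrite iC.
    by have -> : (s k == s i) = false by apply/negbTE; apply: contra ne => /eqP /inj ->.
  by rewrite addn0.
Qed.

Lemma succ_ex i : s i < maxw s -> exists j, s j = (s i).+1.
Proof. move=> lt; exact: packed_val ps (ltn0Sn _) lt. Qed.

Lemma inS_succ i j : i \in S -> s j = (s i).+1 -> i < j.
Proof. by move=> /(subsetP HS) /MP [_ _ H] /H. Qed.

Lemma notM_succ i j : s i < maxw s -> i \notin M s -> s j = (s i).+1 -> j < i.
Proof.
move=> lt nM E; case: (ltngtP j i) => [//|ij|/val_inj ji]; last by move: E; rewrite ji; lia.
case/negP: nM; apply/MP; split => //.
- by move=> k /inj ->.
- by move=> k; rewrite -E => /inj ->.
Qed.

Lemma chain d : forall i j, s j = s i + d ->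
  (forall k, s i <= s k -> s k < s j -> k \notin C) -> i <= j.
Proof.
elim: d => [|d IH] i j E H; first by rewrite addn0 in E; rewrite (inj E).
have [k Ek] : exists k, s k = s i + d.
  have p1 : 0 < s i + d by have := packed_pos i ps; lia.
  have p2 : s i + d <= maxw s by have := leq_maxw s j; lia.
  exact: packed_val ps p1 p2.
have ik : i <= k.
  apply: (IH _ _ Ek) => m H1 H2; apply: H => //; lia.
have kC : k \notin C by apply: H; lia.
have kmax : s k < maxw s by have := leq_maxw s j; lia.
move: kC; rewrite CE kmax /= negb_or negbK => /andP [_ kM].
move/MP: kM => [_ _ K]; have := K j; rewrite Ek E addnS => /(_ erefl); lia.
Qed.

Lemma f_ltw i j : s i < s j -> ltw fw i j.
Proof.
move=> lt; have := fmono (ltnW lt); rewrite leq_eqVlt => /orP [/eqP E|]; last exact: ltw_of_lt.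
apply: ltw_of_eq => //.
have le : i <= j.
  apply: (@chain (s j - s i)); first lia.
  move=> k H1 H2; apply/negP => kC.
  have : #|cset i| < #|cset j|.
    apply: proper_card; apply/properP; split.
      apply/subsetP => m; rewrite !csetE => /andP [-> ?] /=; lia.
    by exists k; rewrite !csetE kC //= ltnNge H1.
  by move: E; rewrite !fwE; lia.
case: (ltngtP i j) => [//|?|/val_inj ij]; [lia | by move: lt; rewrite ij ltnn].
Qed.

Lemma f_ltw_eq i j : ltw fw i j = ltw s i j.
Proof. apply: ltw_sub_eq => {}i {}j; rewrite ltw_inj //; exact: f_ltw. Qed.

Lemma f_packed : packed fw.
Proof.
apply/packedP; split => [i|v v0 vm]; first by rewrite fwE.
have [i vi] := exists_ge vm v0.
suff K : forall m i, s i = m -> v <= fw i -> exists k, fw k = v by exact: K _ i erefl vi.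
clear i vi; elim => [|m IH] i Ei vi; first by have := packed_pos i ps; lia.
case: (eqVneq v (fw i)) => [->|ne]; first by exists i.
case: m IH Ei => [|m] IH Ei.
  have : fw i = 1.
    rewrite fwE; apply/eqP; rewrite eqSS cards_eq0; apply/eqP/setP => k.
    rewrite csetE in_set0 Ei ltnS leqn0; have pk := packed_pos k ps; rewrite (_ : (s k == 0) = false) ?andbF //; lia.
  lia.
have [j Ej] : exists j, s j = m.+1.
  have p2 : m.+1 <= maxw s by have := leq_maxw s i; lia.
  exact: packed_val ps (ltn0Sn _) p2.
have Eij : s i = (s j).+1 by rewrite Ei Ej.
apply: (IH j Ej); have := fsucc Eij; case: (j \in C) => /=; lia.
Qed.

Lemma f_M : M fw = S.
Proof.
apply/setP => i; apply/MP/idP.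
- move=> [H1 H2 H3].
  have simax : s i < maxw s.
    rewrite ltnNge; apply/negP => sm.
    have : maxw fw <= fw i.
      apply/bigmax_leqP => k _; apply: fmono; have := leq_maxw s k; lia.
    lia.
  have [j Ej] := succ_ex simax.
  have Efj := fsucc Ej.
  have sij : s i < s j by rewrite Ej.
  have iC : i \in C.
    apply/negPn/negP => iC; rewrite (negbTE iC) addn0 in Efj.
    have := H2 _ Efj; have := ltw_eq_lt (f_ltw sij) (esym Efj); lia.
  rewrite iC addn1 in Efj; have ij := H3 _ Efj.
  move: iC; rewrite CE simax /= => /orP [//|nM].
  have := notM_succ simax nM Ej; lia.
- move=> iS; have := subsetP HS i iS => /MP [simax _ _].
  have iC : i \in C by rewrite CE simax iS.
  have [j Ej] := succ_ex simax.
  have Efj := fsucc Ej; rewrite iC addn1 in Efj.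
  have ij := inS_succ iS Ej.
  split.
  + by have := leq_maxw fw j; lia.
  + move=> k Ek; case: (eqVneq k i) => [->//|ne].
    case/orP: (ltw_total fw ne) => H.
    * by have := ltw_eq_lt H Ek; lia.
    * move: H; rewrite f_ltw_eq ltw_inj // => lt.
      have : s j <= s k by rewrite Ej.
      move/fmono; lia.
  + move=> k Ek; have : ltw fw i k by apply: ltw_of_lt; rewrite Ek.
    rewrite f_ltw_eq ltw_inj // => lt.
    case: (eqVneq (s k) (s j)) => [/inj -> //|ne].
    have lt' : s j < s k by rewrite Ej; lia.
    have := ltw_eq_lt (f_ltw lt') (etrans Efj (esym Ek)); lia.
Qed.

Lemma surj_main : exists f : word n, packed f /\ Std f = s /\ M f = S.
Proof.
exists fw; split; first exact: f_packed.
split; last exact: f_M.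
rewrite -(@Std_id _ s); last by apply/andP; split => //; apply/injectiveP.
apply: Std_eq; exact: f_ltw_eq.
Qed.

End Surj.

Theorem theorem23 :
  (* (1) *)
  (forall n (f g : word n), packed f -> packed g ->
     (pw_le f g <-> (Std f = Std g /\ M f \subset M g)))
  /\
  (* (2) Phi is a poset isomorphism onto the disjoint union *)
  (forall n, 1 <= n ->
     (* well defined: lands in the component of a permutation sigma,
        as a subset of M(sigma) *)
     (forall f : word n, packed f ->
        is_perm_word (Phi f).1 /\ (Phi f).2 \subset M (Phi f).1) /\
     (* injective on packed words *)
     (forall f g : word n, packed f -> packed g -> Phi f = Phi g -> f = g) /\
     (* surjective onto the disjoint union *)
     (forall (s : word n) (S : {set 'I_n}), is_perm_word s -> S \subset M s ->
        exists f : word n, packed f /\ Phi f = (s, S)) /\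
     (* order preserving and reflecting *)
     (forall f g : word n, packed f -> packed g ->
        (pw_le f g <-> du_le (Phi f) (Phi g)))).
Proof.
split; first by move=> n f g pf _; exact: pw_le_iff.
move=> n _; split; [|split; [|split]].
- move=> f pf; split; [exact: Std_perm_word | exact: Std_M].
- by move=> f g pf pg [E1 E2]; apply: Phi_inj.
- move=> s S /andP [ps /injectiveP inj] HS.
  have [f [pf [E1 E2]]] := surj_main ps inj HS.
  by exists f; split => //; rewrite /Phi E1 E2.
- move=> f g pf _; exact: pw_le_iff.
Qed.
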